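(* Let $r\ge 4$ and let $w:E(K_r)\to\mathbb{R}_{>0}$ be a positive edge-weighting of the complete graph $K_r$ on vertex set $U$. For each edge $e$ let $C_w(e)$ be the maximum of $w(C)=\sum_{f\in E(C)}w(f)$ over all cycles $C$ of $K_r$ containing $e$. Then $$\sum_{e\in E(K_r)}\frac{w(e)}{C_w(e)}=\frac{r-1}{2}$$ holds if and only if $w$ is vertex-induced, i.e. there exists $a:U\to\mathbb{R}_{\ge 0}$ with $w(uv)=\frac{a(u)+a(v)}{2}$ for all edges $uv$. In this case, $C_w(e)=\sum_{v\in U}a(v)$ for all $e\in E(K_r)$. *)

(* Defs.v *)
From HB Require Import structures.
From mathcomp Require Import all_boot all_order all_algebra all_fingroup.
From mathcomp Require Import reals.
Set Implicit Arguments. Unset Strict Implicit. Unset Printing Implicit Defensive.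
Import Order.TTheory GRing.Theory Num.Theory.
Local Open Scope ring_scope.

(* The complete graph K_r on a finite vertex set U: its edges are the
   2-element subsets of U.  An edge-weighting is a function
   w : {set U} -> R (only its values on 2-sets matter). *)
Definition is_edge (U : finType) (e : {set U}) : bool := #|e| == 2%N.

Definition is_cycle (U : finType) (s : seq U) : bool := uniq s && (3 <= size s)%N.

Definition cycle_edges (U : finType) (s : seq U) : seq {set U} :=
  [seq [set p.1; p.2] | p <- zip s (rot 1 s)].

Definition cycle_weight (R : realType) (U : finType) (w : {set U} -> R)
  (s : seq U) : R := \sum_(e <- cycle_edges s) w e.

(* Every cycle (as a
   duplicate-free sequence of length k) is the length-k prefix of some
   permutation of the enumeration of U, so we maximise over these. *)
Definition Cw (R : realType) (U : finType) (w : {set U} -> R) (e : {set U}) : R :=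
  \big[Num.max/0]_(p : {perm U})
   \big[Num.max/0]_(k < #|U|.+1 |
        is_cycle (take k (map p (enum U))) &&
        (e \in cycle_edges (take k (map p (enum U)))))
     cycle_weight w (take k (map p (enum U))).

Definition induced_by (R : realType) (U : finType) (w : {set U} -> R) (a : U -> R) : Prop :=
  (forall v, 0 <= a v) /\ (forall u v, u != v -> w [set u; v] = (a u + a v) / 2).

Definition vertex_induced (R : realType) (U : finType) (w : {set U} -> R) : Prop :=
  exists a : U -> R, induced_by w a.

(* Main.v *)
Require Import Defs.
From HB Require Import structures.
From mathcomp Require Import all_boot all_order all_algebra all_fingroup.
From mathcomp Require Import reals.
From mathcomp Require Import ring lra.
Import Order.TTheory GRing.Theory Num.Theory.
Local Open Scope ring_scope.
Set Implicit Arguments. Unset Strict Implicit.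

Section Aux.
Variable U : finType.

Lemma zip_neq_aux (s' : seq U) (x y : U) : uniq (x :: s') -> y \notin s' -> x != y ->
  all (fun pr => pr.1 != pr.2) (zip (x :: s') (rcons s' y)).
Proof.
elim: s' x => [|z s IH] x /= hu hy hxy; first by rewrite hxy.
case/andP: hu; rewrite inE negb_or => /andP[hxz hxs] hu.
move: hy; rewrite inE negb_or => /andP[hyz hys].
rewrite hxz /=; apply: IH => //; by rewrite eq_sym.
Qed.

Lemma zip_neq (s : seq U) : uniq s -> (2 <= size s)%N ->
  forall pr, pr \in zip s (rot 1 s) -> pr.1 != pr.2.
Proof.
case: s => [|x [|z s]] //= hu _ pr.
case/and3P: hu; rewrite inE negb_or => /andP[hxz hxs] hzs hu.
rewrite inE cats1 => /orP[/eqP -> //|].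
have := @zip_neq_aux s z x.
rewrite /= hzs hu eq_sym hxz => /(_ isT hxs isT) /allP H /H //.
Qed.

Lemma ext_perm (t : seq U) : uniq t ->
  exists p : {perm U}, exists rest, map p (enum U) = t ++ rest.
Proof.
move=> ht.
set s := t ++ [seq z <- enum U | z \notin t].
have us : uniq s.
  rewrite cat_uniq ht filter_uniq ?enum_uniq //= andbT.
  by apply/hasPn => z; rewrite mem_filter => /andP[].
have ps : perm_eq s (enum U).
  apply: uniq_perm => //; first exact: enum_uniq.
  move=> z; rewrite mem_enum mem_cat mem_filter mem_enum andbT; by case: (z \in t).
have ss : size s = size (enum U) by apply: perm_size.
pose f := fun u : U => nth u s (index u (enum U)).
have fi : injective f.
  move=> u v; rewrite /f => E.
  have hu : (index u (enum U) < size s)%N by rewrite ss index_mem mem_enum.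
  have hv : (index v (enum U) < size s)%N by rewrite ss index_mem mem_enum.
  move: E; rewrite (set_nth_default u v hv) => /eqP.
  rewrite nth_uniq // => /eqP E.
  by rewrite -(nth_index u (mem_enum _ u)) E nth_index ?mem_enum.
exists (perm fi), [seq z <- enum U | z \notin t].
rewrite -/s.
case E: (enum U) => [|x0 e'].
  by move: ss; rewrite E /= => /size0nil ->.
rewrite -E.
apply: (@eq_from_nth _ x0); first by rewrite size_map ss.
move=> i; rewrite size_map => hi.
rewrite (nth_map x0) // permE /f index_uniq ?enum_uniq //.
by apply: set_nth_default; rewrite ss.
Qed.

Lemma edges_of_cycle (s : seq U) e : uniq s -> (2 <= size s)%N ->
  e \in cycle_edges s -> is_edge e.
Proof.
move=> us ss /mapP[pr hpr ->].
by rewrite /is_edge cards2 (zip_neq us ss hpr).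
Qed.

Lemma sum_zip1 (T : Type) (R : nmodType) (s : seq U) (t : seq T) (f : U -> R) :
  (size s <= size t)%N -> \sum_(pr <- zip s t) f pr.1 = \sum_(v <- s) f v.
Proof. by move=> h; rewrite -[in RHS](unzip1_zip h) big_map. Qed.

Lemma sum_zip2 (T : Type) (R : nmodType) (s : seq T) (t : seq U) (f : U -> R) :
  (size t <= size s)%N -> \sum_(pr <- zip s t) f pr.2 = \sum_(v <- t) f v.
Proof. by move=> h; rewrite -[in RHS](unzip2_zip h) big_map. Qed.

Variable R : realType.

Lemma cycle_weight_induced (w : {set U} -> R) (a : U -> R) (s : seq U) :
  (forall u v, u != v -> w [set u; v] = (a u + a v) / 2) ->
  uniq s -> (2 <= size s)%N -> cycle_weight w s = \sum_(v <- s) a v.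
Proof.
move=> ha us ss.
rewrite /cycle_weight /cycle_edges big_map.
rewrite (eq_big_seq (fun pr => (a pr.1 + a pr.2) / 2)); last first.
  by move=> pr /(zip_neq us ss) /ha.
rewrite -big_distrl /= big_split /= sum_zip1 ?size_rot // sum_zip2 ?size_rot //.
have prs : perm_eq (rot 1 s) s by rewrite perm_rot.
by rewrite (perm_big _ prs) mulrDl -splitr.
Qed.

Lemma sum_count (F : finType) (s : seq F) (f : F -> R) :
  \sum_(x <- s) f x = \sum_(y : F) (count_mem y s)%:R * f y.
Proof.
elim: s => [|x s IH]; first by rewrite big_nil big1 // => y _; rewrite mul0r.
rewrite big_cons IH /= [RHS](eq_bigr (fun y => (x == y)%:R * f y + (count_mem y s)%:R * f y)); last first.
  by move=> y _; rewrite natrD mulrDl.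
rewrite big_split /=; congr (_ + _).
rewrite (bigD1 x) //= eqxx mul1r big1 ?addr0 // => y hy.
by rewrite eq_sym (negbTE hy) mul0r.
Qed.

Definition Hc (p : {perm U}) := map p (enum U).

Lemma Hc_uniq p : uniq (Hc p).
Proof. by rewrite map_inj_uniq ?enum_uniq //; apply: perm_inj. Qed.

Lemma Hc_size p : size (Hc p) = #|U|.
Proof. by rewrite size_map cardE. Qed.

Variable w : {set U} -> R.

Lemma Cw_ge e (p : {perm U}) (k : 'I_#|U|.+1) :
  is_cycle (take k (Hc p)) -> e \in cycle_edges (take k (Hc p)) ->
  cycle_weight w (take k (Hc p)) <= Cw w e.
Proof.
move=> h1 h2; rewrite /Cw.
apply: (le_trans _ (le_bigmax _ _ p)).
have := @le_bigmax_cond _ _ _ 0 k (fun k0 : 'I_#|U|.+1 => is_cycle (take k0 (Hc p)) && (e \in cycle_edges (take k0 (Hc p)))) (fun k0 : 'I_#|U|.+1 => cycle_weight w (take k0 (Hc p))).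
by rewrite h1 h2; apply.
Qed.

Lemma Cw_ham e (p : {perm U}) : (3 <= #|U|)%N -> e \in cycle_edges (Hc p) ->
  cycle_weight w (Hc p) <= Cw w e.
Proof.
move=> h3 he.
have := @Cw_ge e p ord_max; rewrite /= take_oversize ?Hc_size //; apply=> //.
by rewrite /is_cycle Hc_uniq Hc_size.
Qed.

Lemma Cw_le e M : 0 <= M ->
  (forall (p : {perm U}) (k : 'I_#|U|.+1), is_cycle (take k (Hc p)) ->
     e \in cycle_edges (take k (Hc p)) -> cycle_weight w (take k (Hc p)) <= M) ->
  Cw w e <= M.
Proof.
move=> h0 h; rewrite /Cw; apply: bigmax_le => // p _.
apply: bigmax_le => // k /andP[h1 h2]; exact: h.
Qed.

Lemma zip_map2 (A B C D : Type) (f : A -> C) (g : B -> D) (s : seq A) (t : seq B) :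
  zip (map f s) (map g t) = map (fun pr => (f pr.1, g pr.2)) (zip s t).
Proof. by elim: s t => [|x s IH] [|y t] //=; rewrite IH. Qed.

Lemma cycle_edges_map (sg : {perm U}) (s : seq U) :
  cycle_edges (map sg s) = map (fun A : {set U} => sg @: A) (cycle_edges s).
Proof.
rewrite /cycle_edges -map_rot zip_map2 -!map_comp; apply: eq_map => pr /=.
by rewrite imsetU1 imset_set1.
Qed.

Lemma Hc_mul (p sg : {perm U}) : Hc (p * sg) = map sg (Hc p).
Proof. by rewrite /Hc -map_comp; apply: eq_map => x /=; rewrite permM. Qed.

Definition cnt (e : {set U}) : R :=
  \sum_(p : {perm U}) (count_mem e (cycle_edges (Hc p)))%:R.

Lemma cnt_imset (sg : {perm U}) (e : {set U}) : cnt (sg @: e) = cnt e.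
Proof.
rewrite /cnt (reindex_inj (mulIg sg)) /=; apply: eq_bigr => p _.
rewrite Hc_mul cycle_edges_map count_map; congr (_ %:R); apply: eq_count => A /=.
by rewrite (inj_eq (imset_inj (@perm_inj _ sg))).
Qed.

Lemma edge_trans (e e' : {set U}) : is_edge e -> is_edge e' -> exists sg : {perm U}, sg @: e = e'.
Proof.
move=> /cards2P[x [y [hxy ->]]] /cards2P[x' [y' [hxy' ->]]].
have := @ext_perm [:: x; y]; rewrite /= inE hxy => /(_ isT) [p [rest hp]].
have := @ext_perm [:: x'; y']; rewrite /= inE hxy' => /(_ isT) [q [rest' hq]].
move: hp hq; rewrite /=.
case E: (enum U) => [|e0 [|e1 l]] /=; try by move=> [].
move=> [hx hy _] [hx' hy' _].
exists (p^-1 * q)%g; rewrite imsetU1 imset_set1 !permM -hx -hy !permK hx' hy' //.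
Qed.

Lemma cnt_const (e e' : {set U}) : is_edge e -> is_edge e' -> cnt e = cnt e'.
Proof. by move=> he he'; have [sg <-] := edge_trans he he'; rewrite cnt_imset. Qed.

Lemma T_eq (e0 : {set U}) (f : {set U} -> R) : (2 <= #|U|)%N -> is_edge e0 ->
  \sum_(p : {perm U}) \sum_(e <- cycle_edges (Hc p)) f e =
  cnt e0 * \sum_(e | is_edge e) f e.
Proof.
move=> h2 he0.
rewrite (eq_bigr (fun p => \sum_(y : {set U}) (count_mem y (cycle_edges (Hc p)))%:R * f y)); last first.
  by move=> p _; rewrite sum_count.
rewrite exchange_big /= (bigID (@is_edge U)) /= [X in _ + X]big1 ?addr0; last first.
  move=> e he; rewrite -mulr_suml big1 ?mul0r // => p _.
  have /count_memPn -> // : e \notin cycle_edges (Hc p).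
  apply/negP => /edges_of_cycle; rewrite Hc_uniq Hc_size h2 => /(_ isT isT).
  by rewrite (negbTE he).
rewrite mulr_sumr; apply: eq_bigr => e he.
by rewrite -mulr_suml -/(cnt e) (cnt_const he he0).
Qed.

Lemma size_cycle_edges (s : seq U) : size (cycle_edges s) = size s.
Proof. by rewrite size_map size_zip size_rot minnn. Qed.

Lemma card_edges : #|[pred e : {set U} | is_edge e]| = 'C(#|U|, 2).
Proof. by rewrite -card_draws; apply: eq_card => e; rewrite !inE. Qed.

Lemma sum1R (T : Type) (s : seq T) : \sum_(x <- s) (1 : R) = (size s)%:R.
Proof. by rewrite -sum1_size natr_sum. Qed.

Lemma cnt_val (e0 : {set U}) : (2 <= #|U|)%N -> is_edge e0 ->
  cnt e0 * (#|U|.-1)%:R = 2 * #|{perm U}|%:R.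
Proof.
move=> h2 he0.
have := T_eq (fun _ => 1) h2 he0.
rewrite (eq_bigr (fun _ => #|U|%:R)); last first.
  by move=> p _; rewrite sum1R size_cycle_edges Hc_size.
rewrite sumr_const.
have -> : \sum_(e : {set U} | is_edge e) (1 : R) = 'C(#|U|, 2)%:R.
  by rewrite -card_edges -sum1_card natr_sum.
rewrite -mulr_natr => hT.
have hC := bin_ffact #|U| 2; rewrite ffactnS ffactn1 /= in hC.
have hn : (#|U|%:R : R) != 0 by rewrite pnatr_eq0 -lt0n; apply: leq_trans h2.
apply: (mulfI hn).
have : ('C(#|U|, 2) * 2)%:R = (#|U| * #|U|.-1)%:R :> R by rewrite hC.
rewrite !natrM => hC'.
rewrite mulrCA -hC' mulrA -hT -mulr_natr.
change (#|xpredT|) with #|{perm U}|.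
ring.
Qed.

Lemma sum_pos_seq (s : seq {set U}) (F : {set U} -> R) :
  (forall e, e \in s -> 0 < F e) -> s != [::] -> 0 < \sum_(e <- s) F e.
Proof.
case: s => [//|x s] h _; rewrite big_cons.
apply: (lt_le_trans (h x (mem_head _ _))); rewrite lerDl big_seq.
by apply: sumr_ge0 => i hi; apply: ltW; apply: h; rewrite inE hi orbT.
Qed.

Lemma psum_seq_eq0 (T : eqType) (s : seq T) (F : T -> R) :
  (forall i, i \in s -> 0 <= F i) -> \sum_(i <- s) F i = 0 -> forall i, i \in s -> F i = 0.
Proof.
elim: s => [//|x s IH] h; rewrite big_cons => /eqP.
have hx := h x (mem_head _ _).
have hs : forall i, i \in s -> 0 <= F i by move=> i hi; apply: h; rewrite inE hi orbT.
rewrite paddr_eq0 //; last by rewrite big_seq; apply: sumr_ge0.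
case/andP=> /eqP h1 /eqP h2 i; rewrite inE => /orP[/eqP -> //|]; exact: IH.
Qed.

Hypothesis hw : forall e : {set U}, is_edge e -> 0 < w e.
Hypothesis h3 : (3 <= #|U|)%N.

Lemma h2U : (2 <= #|U|)%N. Proof. exact: ltnW. Qed.

Lemma E_edge p e : e \in cycle_edges (Hc p) -> is_edge e.
Proof. by apply: edges_of_cycle; rewrite ?Hc_uniq ?Hc_size ?h2U. Qed.

Lemma W_pos p : 0 < cycle_weight w (Hc p).
Proof.
apply: sum_pos_seq; first by move=> e /E_edge /hw.
by rewrite -size_eq0 size_cycle_edges Hc_size -lt0n; apply: leq_trans h3.
Qed.

Lemma term_le1 p : \sum_(e <- cycle_edges (Hc p)) w e / Cw w e <= 1.
Proof.
have hW := W_pos p.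
rewrite -(divff (lt0r_neq0 hW)) {2}/cycle_weight mulr_suml.
rewrite big_seq [X in _ <= X]big_seq; apply: ler_sum => e he.
have hwe := hw (E_edge he).
rewrite ler_pM2l // lef_pV2 ?posrE //; first exact: Cw_ham.
exact: (lt_le_trans hW (Cw_ham h3 he)).
Qed.

Lemma term_eq1 p : \sum_(e <- cycle_edges (Hc p)) w e / Cw w e = 1 ->
  forall e, e \in cycle_edges (Hc p) -> Cw w e = cycle_weight w (Hc p).
Proof.
move=> h1.
have hW := W_pos p.
have h0 : \sum_(e <- cycle_edges (Hc p)) (w e / cycle_weight w (Hc p) - w e / Cw w e) = 0.
  rewrite sumrB h1 -mulr_suml -/(cycle_weight w (Hc p)) divff ?subrr //.
  exact: lt0r_neq0.
have hnn : forall e', e' \in cycle_edges (Hc p) ->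
    0 <= w e' / cycle_weight w (Hc p) - w e' / Cw w e'.
  move=> e' he'; rewrite subr_ge0.
  have hwe' := hw (E_edge he').
  rewrite ler_pM2l // lef_pV2 ?posrE //; first exact: Cw_ham.
  exact: (lt_le_trans hW (Cw_ham h3 he')).
move=> e he; have := psum_seq_eq0 hnn h0 he.
have hwe := hw (E_edge he).
have hC := lt_le_trans hW (Cw_ham h3 he).
by move=> /subr0_eq /(mulfI (lt0r_neq0 hwe)) /invr_inj ->.
Qed.

Hypothesis Heq : forall p e, e \in cycle_edges (Hc p) -> Cw w e = cycle_weight w (Hc p).

Lemma four (x y u v : U) : uniq [:: x; y; u; v] ->
  w [set x; y] + w [set u; v] = w [set x; u] + w [set y; v].
Proof.
move=> hu4; have [p [rest hp]] := ext_perm hu4.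
have hu : uniq ([:: x; y; u; v] ++ rest) by rewrite -hp Hc_uniq.
pose q := (p * tperm y u)%g.
have hq : Hc q = [:: x; u; y; v] ++ rest.
  rewrite /q Hc_mul /Hc hp /=.
  move: hu; rewrite /= !inE !negb_or => /and5P[/and4P[hxy hxu hxv hxr] /and3P[hyu hyv hyr] /andP[huv hur] hvr _].
  rewrite tpermL tpermR !tpermD // 1?eq_sym //.
  congr [:: _, _, _, _ & _]; rewrite -[RHS]map_id; apply/eq_in_map => z hz /=.
  by apply: tpermD; apply/eqP => E; subst z; [move: hyr|move: hur]; rewrite hz.
have hp' : Hc p = [:: x; y; u; v] ++ rest := hp.
have e1 : [set y; u] \in cycle_edges (Hc p) by rewrite hp' /cycle_edges /= !inE eqxx !orbT.
have e2 : [set y; u] \in cycle_edges (Hc q) by rewrite hq /cycle_edges /= setUC !inE eqxx !orbT.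
have := Heq e2; rewrite (Heq e1) hp' hq /cycle_weight /cycle_edges /= !big_cons.
rewrite (setUC [set u] [set y]).
set S := \sum_(_ <- _) _.
move=> h; lra.
Qed.

Lemma sumHc p (f : U -> R) : \sum_(v <- Hc p) f v = \sum_v f v.
Proof.
have pe : perm_eq (Hc p) (enum U).
  apply: uniq_perm; rewrite ?Hc_uniq ?enum_uniq // => z.
  rewrite mem_enum; apply/mapP; exists (p^-1 z)%g; rewrite ?mem_enum ?permKV //.
rewrite (perm_big _ pe) big_enum; apply: eq_bigl => z; by [].
Qed.

Definition fx (x y z : U) := w [set x; y] + w [set x; z] - w [set y; z].

Lemma fx_sym x y z : fx x y z = fx x z y.
Proof. by rewrite /fx (setUC [set y]) (addrC (w [set x; y])). Qed.

Lemma fx_step x y z z' : x != y -> x != z -> y != z -> z' != x -> z' != y ->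
  fx x y z = fx x y z'.
Proof.
move=> hxy hxz hyz hz'x hz'y.
have [-> //|hzz'] := eqVneq z z'.
have := @four x z z' y; rewrite /= !inE !negb_or hxz eq_sym hz'x hxy hzz' eq_sym hyz hz'y /=.
move=> /(_ isT) h; rewrite (setUC [set z']) (setUC [set z]) in h; rewrite /fx.
move: h; generalize (w [set x; y]) (w [set x; z]) (w [set y; z]) (w [set x; z']) (w [set y; z']).
move=> A B C D E h; lra.
Qed.

Lemma fx_indep x y z y' z' : y != x -> z != x -> y != z -> y' != x -> z' != x -> y' != z' ->
  fx x y z = fx x y' z'.
Proof.
move=> hyx hzx hyz hy'x hz'x hy'z'.
have hxy : x != y by rewrite eq_sym.
have hxz : x != z by rewrite eq_sym.
have hxz' : x != z' by rewrite eq_sym.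
have [hz'y|hz'y] := eqVneq z' y.
  subst z'; rewrite [RHS]fx_sym.
  by apply: fx_step.
rewrite (@fx_step x y z z') // fx_sym (@fx_step x z' y y') //.
by rewrite fx_sym.
Qed.

Definition a_of (x : U) : R :=
  if [pick yz : U * U | (yz.1 != x) && (yz.2 != x) && (yz.1 != yz.2)] is Some yz
  then fx x yz.1 yz.2 else 0.

Lemma a_val x y z : y != x -> z != x -> y != z -> a_of x = fx x y z.
Proof.
move=> hyx hzx hyz; rewrite /a_of; case: pickP => [[y' z'] /= /andP[/andP[h1 h2] h3']|H].
  exact: fx_indep.
by have := H (y, z); rewrite /= hyx hzx hyz.
Qed.

Lemma third (u v : U) : exists z, (z != u) && (z != v).
Proof.
case: (pickP (fun z => (z != u) && (z != v))) => [z hz|H]; first by exists z.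
have : (#|U| <= #|[set u; v]|)%N.
  apply: subset_leq_card; apply/subsetP => z _; have := H z; rewrite !inE.
  by case: (z == u); case: (z == v).
rewrite cards2; case: (u != v) => /= h; have := leq_trans h3 h; by [].
Qed.

Lemma a_induced u v : u != v -> w [set u; v] = (a_of u + a_of v) / 2.
Proof.
move=> huv; have [z /andP[hzu hzv]] := third u v.
have h1 : a_of u = fx u v z by apply: a_val; rewrite // eq_sym.
have h2 : a_of v = fx v u z by apply: a_val; rewrite // eq_sym.
rewrite h1 h2 /fx.
rewrite (setUC [set v] [set u]).
generalize (w [set u; v]) (w [set u; z]) (w [set v; z]) => A B C; lra.
Qed.

Lemma sum_uniq_le (a : U -> R) (s : seq U) : (forall v, 0 <= a v) -> uniq s ->
  \sum_(v <- s) a v <= \sum_v a v.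
Proof.
move=> ha us; rewrite big_uniq // [X in _ <= X](bigID (mem s)) /= lerDl.
by apply: sumr_ge0.
Qed.

Lemma first_edge (x y : U) (l : seq U) : [set x; y] \in cycle_edges [:: x, y & l].
Proof. by rewrite /cycle_edges /= inE eqxx. Qed.

Lemma ham_through (x y : U) : x != y ->
  exists p, [set x; y] \in cycle_edges (Hc p).
Proof.
move=> hxy; have := @ext_perm [:: x; y]; rewrite /= inE hxy => /(_ isT) [p [rest hp]].
by exists p; rewrite /Hc hp first_edge.
Qed.

Lemma Cw_induced (a : U -> R) e : (forall v, 0 <= a v) ->
  (forall u v, u != v -> w [set u; v] = (a u + a v) / 2) -> is_edge e ->
  Cw w e = \sum_v a v.
Proof.
move=> ha hind he; apply/eqP; rewrite eq_le; apply/andP; split.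
  apply: Cw_le; first by apply: sumr_ge0.
  move=> p k /andP[hu hs] _; rewrite (cycle_weight_induced hind hu (ltnW hs)).
  exact: sum_uniq_le.
move/cards2P: he => [x [y [hxy ->]]].
have [p hp] := ham_through hxy.
apply: le_trans (Cw_ham h3 hp).
by rewrite (cycle_weight_induced hind (Hc_uniq p)) ?Hc_size ?h2U // sumHc.
Qed.

Lemma a_nonneg (h4 : (4 <= #|U|)%N) x : 0 <= a_of x.
Proof.
set s' := enum (predC1 x).
have us' : uniq s' by apply: enum_uniq.
have ss' : size s' = #|U|.-1 by rewrite -cardE cardC1.
have ut : uniq (s' ++ [:: x]).
  by rewrite cat_uniq us' /= mem_enum !inE eqxx.
have [p [rest hp]] := ext_perm ut.
have hk : (size s' < #|U|.+1)%N by rewrite ss' ltnS leq_pred.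
have ht : take (Ordinal hk) (Hc p) = s' by rewrite /Hc hp -catA take_size_cat.
have hs3 : (3 <= size s')%N by rewrite ss' -ltnS prednK //; apply: leq_trans h4.
have hcyc : is_cycle s' by rewrite /is_cycle us' hs3.
move: hs3 hcyc; case E: s' => [|z1 [|z2 l]] // hs3 hcyc.
have hz : z1 != z2 by move: us'; rewrite E /= inE negb_or => /andP[/andP[]].
have he := first_edge z1 z2 l.
have := @Cw_ge [set z1; z2] p (Ordinal hk); rewrite ht E => /(_ hcyc he).
have [q hq] := ham_through hz.
rewrite (Heq hq) (cycle_weight_induced a_induced (Hc_uniq q)) ?Hc_size ?h2U // sumHc.
rewrite -E (cycle_weight_induced a_induced us') ?ss'; last by rewrite -ltnS prednK //; apply: leq_trans h4.
rewrite big_enum [X in _ <= X -> _](bigD1 x) //=.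
have -> : \sum_(i in predC1 x) a_of i = \sum_(i | i != x) a_of i by apply: eq_bigl => i; rewrite !inE.
by rewrite lerDr.
Qed.
End Aux.

Unset Implicit Arguments.

Theorem proposition3p9 (R : realType) (U : finType) (r : nat)
  (hU : #|U| = r) (hr : (4 <= r)%N) (w : {set U} -> R)
  (hw : forall e : {set U}, is_edge e -> 0 < w e) :
  ((\sum_(e : {set U} | is_edge e) w e / Cw w e = (r - 1)%:R / 2)
     <-> vertex_induced w)
  /\ (forall a : U -> R, induced_by w a ->
        forall e : {set U}, is_edge e -> Cw w e = \sum_(v : U) a v).
Proof.
have h4 : (4 <= #|U|)%N by rewrite hU.
have h3 : (3 <= #|U|)%N by apply: ltnW.
have h2 : (2 <= #|U|)%N by apply: ltnW.
have [x0 _] : exists x0 : U, x0 \in U by apply/card_gt0P; apply: leq_trans h4.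
have [y0 /andP[hy0 _]] := third h3 x0 x0.
set e0 := [set y0; x0].
have he0 : is_edge e0 by rewrite /is_edge cards2 hy0.
have hN := cnt_val R h2 he0.
set N := cnt R e0 in hN.
set P := (#|{perm U}|%:R : R) in hN.
have hP : P != 0.
  rewrite /P pnatr_eq0 -lt0n; apply/card_gt0P; by exists 1%g.
have hNP : N * ((r - 1)%:R / 2) = P.
  rewrite -hU subn1 mulrA hN mulrC mulrA mulVf ?mul1r //.
  by rewrite pnatr_eq0.
have hN0 : N != 0 by apply: contraNneq hP => h0; rewrite -hNP h0 mul0r.
have hT := fun f => T_eq f h2 he0.
set g := fun p : {perm U} => \sum_(e <- cycle_edges (Hc p)) w e / Cw w e.
have hsum : \sum_p g p = N * \sum_(e | is_edge e) w e / Cw w e by apply: hT.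
have part2 : forall a : U -> R, induced_by w a ->
    forall e : {set U}, is_edge e -> Cw w e = \sum_(v : U) a v.
  by move=> a [ha hind] e he; apply: Cw_induced.
split=> //; split.
- move=> hS.
  have hsumP : \sum_p g p = P by rewrite hsum hS hNP.
  have h0 : \sum_p (1 - g p) = 0.
    by rewrite sumrB hsumP sumr_const; apply: subrr.
  have hg : forall p, g p = 1.
    move=> p; apply/eqP; rewrite eq_sym -subr_eq0; apply/eqP.
    apply: (psumr_eq0P _ h0) => // q _; rewrite subr_ge0; exact: term_le1.
  have Heq : forall p e, e \in cycle_edges (Hc p) -> Cw w e = cycle_weight w (Hc p).
    by move=> p e; apply: term_eq1 => //; apply: hg.
  exists (a_of w); split; first exact: a_nonneg.
  by move=> u v huv; apply: a_induced.
- move=> [a [ha hind]].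
  have hg : forall p, g p = 1.
    move=> p; rewrite /g.
    have hWp := W_pos hw h3 p.
    rewrite (eq_big_seq (fun e => w e / \sum_v a v)); last first.
      by move=> e he; rewrite (Cw_induced h3 ha hind (E_edge h3 he)).
    rewrite -mulr_suml -/(cycle_weight w (Hc p)).
    rewrite (cycle_weight_induced hind (Hc_uniq p)) ?Hc_size // sumHc divff //.
    rewrite -(sumHc p) -(cycle_weight_induced hind (Hc_uniq p)) ?Hc_size //.
    exact: lt0r_neq0.
  have hsumP : \sum_p g p = P by rewrite (eq_bigr (fun _ => 1)) // sumr_const.
  apply: (mulfI hN0); by rewrite -hsum hsumP hNP.
Qed.
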